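(* Let $(a_n)_{n\ge1}$ be real scalars and let $T_n\in(c_0)^*$ be given by $T_nx=a_nx_n$ for $x=(x_k)_{k\ge1}\in c_0$. Then $\mathcal{R}(\{T_n:n\ge1\})=\|a\|_{\ell^2}$ (both sides possibly infinite).
   Context: $c_0$ is the space of real null sequences with the sup norm. For a family $\mathscr{T}\subseteq\mathcal{L}(X,Y)$, the $R$-bound $\mathcal{R}(\mathscr{T})$ is the least $C\in[0,\infty]$ such that $(\mathbb{E}\|\sum_{n=1}^N r_nS_nx_n\|^2)^{1/2}\le C(\mathbb{E}\|\sum_{n=1}^N r_nx_n\|^2)^{1/2}$ for all $N$, all $S_1,\dots,S_N\in\mathscr{T}$ and all $x_1,\dots,x_N\in X$, where $(r_n)$ is a Rademacher sequence. *)

(* Defs.v *)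
From Stdlib Require Import Reals Lra ClassicalEpsilon FunctionalExtensionality.
Open Scope R_scope.

Inductive ereal : Type := Fin (r : R) | PInf.

Definition ereal_le (x y : ereal) : Prop :=
  match x, y with
  | _, PInf => True
  | PInf, Fin _ => False
  | Fin a, Fin b => a <= b
  end.

Fixpoint fsum (N : nat) (f : nat -> R) : R :=
  match N with
  | O => 0
  | S n => fsum n f + f n
  end.

(** c_0 : real null sequences (indexed by nat; index k stands for k+1). *)
Definition is_c0 (x : nat -> R) : Prop := Un_cv x 0.

(** Supremum norm sup_k |x k| (defined for bounded sequences; 0 otherwise,
    a value never used on c_0 since null sequences are bounded). *)
Definition supnorm (x : nat -> R) : R :=
  match excluded_middle_informative (bound (EUn (fun k => Rabs (x k)))) with
  | left Hb =>
      proj1_sig (completeness (EUn (fun k => Rabs (x k))) Hb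
                   (ex_intro _ (Rabs (x 0%nat)) (ex_intro _ 0%nat eq_refl)))
  | right _ => 0
  end.

(** Expectation over a Rademacher sequence r_0, ..., r_(N-1):
    average of F over the 2^N sign vectors (r_i in {1,-1}, i < N). *)
Definition upd (e : nat -> R) (n : nat) (v : R) : nat -> R :=
  fun k => if Nat.eqb k n then v else e k.

Fixpoint rad_exp (N : nat) (F : (nat -> R) -> R) : R :=
  match N with
  | O => F (fun _ => 0)
  | S n => (rad_exp n (fun e => F (upd e n 1))
            + rad_exp n (fun e => F (upd e n (-1)))) / 2
  end.

(** Bounded linear operators c_0 -> R, represented as functions on sequences. *)
Definition op := (nat -> R) -> R.

(** C (in [0,oo]) satisfies the R-bound inequality for the family [fam]
    of operators c_0 -> R (norm of R = absolute value). *)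
Definition Rbound_ok (fam : op -> Prop) (C : ereal) : Prop :=
  match C with
  | PInf => True
  | Fin c =>
      0 <= c /\
      forall (N : nat) (S : nat -> op) (x : nat -> nat -> R),
        (forall i, (i < N)%nat -> fam (S i)) ->
        (forall i, (i < N)%nat -> is_c0 (x i)) ->
        sqrt (rad_exp N (fun r => (Rabs (fsum N (fun i => r i * S i (x i)))) ^ 2))
        <= c * sqrt (rad_exp N (fun r => (supnorm (fun k => fsum N (fun i => r i * x i k))) ^ 2))
  end.

Definition is_Rbound (fam : op -> Prop) (C : ereal) : Prop :=
  Rbound_ok fam C /\ forall D, Rbound_ok fam D -> ereal_le C D.

Definition l2norm (a : nat -> R) : ereal :=
  match excluded_middle_informative
          (exists l, Un_cv (fun N => fsum N (fun n => a n ^ 2)) l) with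
  | left H =>
      Fin (sqrt (proj1_sig (constructive_indefinite_description _ H)))
  | right _ => PInf
  end.

Definition Tdiag (a : nat -> R) (n : nat) : op := fun x => a n * x n.

(* Main.v *)
Require Import Defs.
From Stdlib Require Import Reals Lra Lia FunctionalExtensionality ClassicalEpsilon.
Open Scope R_scope.

Lemma fsum_ext N f g : (forall i, (i < N)%nat -> f i = g i) -> fsum N f = fsum N g.
Proof.
  induction N; simpl; intros H; [reflexivity|].
  rewrite IHN by (intros; apply H; lia). rewrite H by lia. reflexivity.
Qed.

Lemma fsum_le N f g : (forall i, (i < N)%nat -> f i <= g i) -> fsum N f <= fsum N g.
Proof.
  induction N; simpl; intros H; [lra|].
  assert (fsum N f <= fsum N g) by (apply IHN; intros; apply H; lia).
  assert (f N <= g N) by (apply H; lia). lra.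
Qed.

Lemma fsum_plus N f g : fsum N (fun i => f i + g i) = fsum N f + fsum N g.
Proof. induction N; simpl; [lra|]. rewrite IHN; ring. Qed.

Lemma fsum_scal N f c : fsum N (fun i => f i * c) = fsum N f * c.
Proof. induction N; simpl; [ring|]. rewrite IHN; ring. Qed.

Lemma fsum_nonneg N f : (forall i, 0 <= f i) -> 0 <= fsum N f.
Proof. induction N; simpl; intros H; [lra|]. specialize (IHN H). specialize (H N). lra. Qed.

Lemma fsum_single N f j : (forall i, 0 <= f i) -> (j < N)%nat -> f j <= fsum N f.
Proof.
  induction N; simpl; intros H Hj; [lia|].
  destruct (Nat.eq_dec j N) as [->|Hne].
  - pose proof (fsum_nonneg N f H). lra.
  - assert (f j <= fsum N f) by (apply IHN; auto; lia). specialize (H N). lra.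
Qed.

Lemma rad_exp_ext N F G : (forall e, F e = G e) -> rad_exp N F = rad_exp N G.
Proof. intros H. replace F with G; [reflexivity|]. apply functional_extensionality; intros; symmetry; auto. Qed.

Lemma rad_exp_const N c : rad_exp N (fun _ => c) = c.
Proof. induction N; simpl; [reflexivity|]. rewrite IHN. field. Qed.

Lemma rad_exp_mono N : forall F G,
  (forall e, (forall k, Rabs (e k) <= 1) -> F e <= G e) -> rad_exp N F <= rad_exp N G.
Proof.
  induction N; simpl; intros F G H.
  - apply H. intros; rewrite Rabs_R0; lra.
  - assert (Hu : forall e v, Rabs v = 1 -> (forall k, Rabs (e k) <= 1) ->
               forall k, Rabs (upd e N v k) <= 1).
    { intros e v Hv He k. unfold upd. destruct (Nat.eqb k N); [lra|apply He]. }
    assert (A : rad_exp N (fun e => F (upd e N 1)) <= rad_exp N (fun e => G (upd e N 1))).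
    { apply IHN. intros e He. apply H. apply Hu; auto. apply Rabs_R1. }
    assert (B : rad_exp N (fun e => F (upd e N (-1))) <= rad_exp N (fun e => G (upd e N (-1)))).
    { apply IHN. intros e He. apply H. apply Hu; auto. unfold Rabs; destruct (Rcase_abs (-1)); lra. }
    lra.
Qed.

Lemma upd_sum n e v c : fsum n (fun i => upd e n v i * c i) = fsum n (fun i => e i * c i).
Proof.
  apply fsum_ext. intros i Hi. unfold upd.
  destruct (Nat.eqb i n) eqn:E; [apply Nat.eqb_eq in E; lia|reflexivity].
Qed.

Lemma rad_square N c : forall b,
  rad_exp N (fun r => (b + fsum N (fun i => r i * c i)) ^ 2) = b ^ 2 + fsum N (fun i => c i ^ 2).
Proof.
  induction N; intro b; cbn [rad_exp fsum].
  - ring.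
  - assert (Hv : forall v, rad_exp N (fun e => (b + (fsum N (fun i => upd e N v i * c i) + upd e N v N * c N)) ^ 2)
                 = (b + v * c N) ^ 2 + fsum N (fun i => c i ^ 2)).
    { intro v. rewrite <- IHN. apply rad_exp_ext. intro e. rewrite upd_sum.
      unfold upd. rewrite Nat.eqb_refl. ring. }
    rewrite !Hv. field.
Qed.

Lemma rad_square0 N c :
  rad_exp N (fun r => (Rabs (fsum N (fun i => r i * c i))) ^ 2) = fsum N (fun i => c i ^ 2).
Proof.
  rewrite <- (Rplus_0_l (fsum N _)). replace 0 with (0 ^ 2) at 1 by ring.
  rewrite <- rad_square. apply rad_exp_ext. intro e. rewrite pow2_abs. f_equal. ring.
Qed.

Lemma cv_const c : Un_cv (fun _ => c) c.
Proof. intros eps He. exists 0%nat. intros. unfold R_dist. rewrite Rminus_diag, Rabs_R0. lra. Qed.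

Lemma comb_c0 N r x : (forall i, (i < N)%nat -> is_c0 (x i)) ->
  is_c0 (fun k => fsum N (fun i => r i * x i k)).
Proof.
  unfold is_c0. induction N; simpl; intros H.
  - apply cv_const.
  - replace 0 with (0 + r N * 0) by ring.
    apply CV_plus. apply IHN; intros; apply H; lia.
    apply CV_mult. apply cv_const. apply H; lia.
Qed.

Lemma supnorm_ge y k : is_c0 y -> Rabs (y k) <= supnorm y.
Proof.
  intros Hy. unfold supnorm.
  destruct (excluded_middle_informative _) as [Hb|Hnb].
  - destruct (completeness _ _ _) as [s Hs]. simpl. destruct Hs as [Hs _]. apply Hs. exists k. reflexivity.
  - exfalso. apply Hnb. apply cauchy_bound. apply CV_Cauchy. exists 0.
    rewrite <- Rabs_R0. apply cv_cvabs. exact Hy.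
Qed.

Lemma supnorm_le1 y : (forall k, Rabs (y k) <= 1) -> 0 <= supnorm y <= 1.
Proof.
  intros Hy. unfold supnorm.
  destruct (excluded_middle_informative _) as [Hb|Hnb]; [|lra].
  destruct (completeness _ _ _) as [s Hs]. simpl. destruct Hs as [Hs Hl]. split.
  - apply Rle_trans with (Rabs (y 0%nat)); [apply Rabs_pos|]. apply Hs. exists 0%nat; reflexivity.
  - apply Hl. intros z [i ->]. apply Hy.
Qed.

Lemma exists_B N (P : nat -> nat -> Prop) : (forall i, (i < N)%nat -> exists n, P i n) ->
  exists B, forall i, (i < N)%nat -> exists n, (n < B)%nat /\ P i n.
Proof.
  induction N; intros H.
  - exists 0%nat. intros; lia.
  - destruct IHN as [B HB]. intros; apply H; lia.
    destruct (H N) as [n Hn]. lia.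
    exists (Nat.max B (S n)). intros i Hi.
    destruct (Nat.eq_dec i N) as [->|Hne].
    + exists n. split; auto. lia.
    + destruct (HB i) as [m [Hm Pm]]. lia. exists m. split; auto. lia.
Qed.

Lemma group_bound (a : nat -> R) (y : nat -> nat -> R) (t : nat -> R) B N :
  (forall i k, 0 <= y i k) ->
  (forall i, (i < N)%nat -> exists n, (n < B)%nat /\ t i <= a n ^ 2 * y i n) ->
  fsum N t <= fsum B (fun k => a k ^ 2 * fsum N (fun i => y i k)).
Proof.
  intros Hy. induction N; simpl; intros H.
  - rewrite (fsum_ext B _ (fun _ => 0 * 0)) by (intros; ring).
    rewrite fsum_scal. lra.
  - assert (IH : fsum N t <= fsum B (fun k => a k ^ 2 * fsum N (fun i => y i k)))
      by (apply IHN; intros; apply H; lia).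
    destruct (H N) as [n [Hn Ht]]. lia.
    rewrite (fsum_ext B _ (fun k => a k ^ 2 * fsum N (fun i => y i k) + a k ^ 2 * y N k))
      by (intros; ring).
    rewrite fsum_plus.
    assert (a n ^ 2 * y N n <= fsum B (fun k => a k ^ 2 * y N k)).
    { apply (fsum_single B (fun k => a k ^ 2 * y N k)); auto.
      intros; apply Rmult_le_pos; [apply pow2_ge_0|apply Hy]. }
    lra.
Qed.

Lemma growing_fsum a : Un_growing (fun N => fsum N (fun n => a n ^ 2)).
Proof. intro n. simpl. pose proof (pow2_ge_0 (a n)). lra. Qed.

Definition ev (i : nat) : nat -> R := fun k => if Nat.eqb k i then 1 else 0.

Lemma ev_c0 i : is_c0 (ev i).
Proof.
  intros eps He. exists (S i). intros n Hn. unfold R_dist, ev.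
  destruct (Nat.eqb n i) eqn:E; [apply Nat.eqb_eq in E; lia|].
  rewrite Rminus_diag, Rabs_R0. lra.
Qed.

Lemma fsum_ev N e k : Rabs (e k) <= 1 -> Rabs (fsum N (fun i => e i * ev i k)) <= 1.
Proof.
  intros He. assert (forall N, fsum N (fun i => e i * ev i k) = if Nat.ltb k N then e k else 0).
  { induction N0; cbn [fsum]; [reflexivity|]. rewrite IHN0. unfold ev.
    destruct (Nat.eqb k N0) eqn:E.
    - apply Nat.eqb_eq in E; subst. replace (Nat.ltb N0 N0) with false by (symmetry; apply Nat.ltb_ge; lia).
      replace (Nat.ltb N0 (S N0)) with true by (symmetry; apply Nat.ltb_lt; lia). ring.
    - apply Nat.eqb_neq in E.
      destruct (Nat.ltb_spec k N0); destruct (Nat.ltb_spec k (S N0)); try lia; ring. }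
  rewrite H. destruct (Nat.ltb k N); auto. rewrite Rabs_R0; lra.
Qed.

Lemma lower a d : Rbound_ok (fun S => exists n : nat, S = Tdiag a n) (Fin d) ->
  forall N, fsum N (fun n => a n ^ 2) <= d ^ 2.
Proof.
  intros [Hd H] N.
  specialize (H N (fun i => Tdiag a i) (fun i => ev i)).
  assert (Hl : rad_exp N (fun r => Rabs (fsum N (fun i => r i * Tdiag a i (ev i))) ^ 2)
               = fsum N (fun n => a n ^ 2)).
  { rewrite rad_square0. apply fsum_ext. intros i _. unfold Tdiag, ev. rewrite Nat.eqb_refl. ring. }
  assert (Hr : rad_exp N (fun r => supnorm (fun k => fsum N (fun i => r i * ev i k)) ^ 2) <= 1).
  { apply Rle_trans with (rad_exp N (fun _ => 1)); [|rewrite rad_exp_const; lra]. apply rad_exp_mono. intros e He.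
    destruct (supnorm_le1 (fun k => fsum N (fun i => e i * ev i k))) as [H0 H1].
    intro k. apply fsum_ev. apply He. replace 1 with (1 ^ 2) by ring. apply pow_incr; lra. }
  cbv beta in H. rewrite Hl in H.
  assert (Hs : sqrt (fsum N (fun n => a n ^ 2)) <= d).
  { eapply Rle_trans. apply H. intros i _. exists i. reflexivity. intros; apply ev_c0.
    rewrite <- (Rmult_1_r d) at 2. apply Rmult_le_compat_l; auto.
    rewrite <- sqrt_1. apply sqrt_le_1_alt; auto. }
  pose proof (fsum_nonneg N (fun n => a n ^ 2) (fun n => pow2_ge_0 (a n))).
  rewrite <- (sqrt_pow2 (fsum N _)) in Hs by auto.
  assert (0 <= sqrt (fsum N (fun n => a n ^ 2))) by apply sqrt_pos.
  rewrite <- (pow2_sqrt (fsum N (fun n => a n ^ 2))) by auto.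
  apply pow_incr. split; auto. rewrite sqrt_pow2 in Hs by auto. exact Hs.
Qed.

Theorem mainTheorem5 (a : nat -> R) :
  is_Rbound (fun S => exists n : nat, S = Tdiag a n) (l2norm a).
Proof.
  unfold l2norm. destruct (excluded_middle_informative _) as [Hex|Hnex].
  - destruct (constructive_indefinite_description _ Hex) as [l Hl]. simpl.
    pose proof (growing_ineq _ _ (growing_fsum a) Hl) as Hle.
    assert (Hl0 : 0 <= l) by (apply (Hle 0%nat)).
    split.
    + split; [apply sqrt_pos|].
      intros N S x HS Hx.
      set (M := rad_exp N (fun r => supnorm (fun k => fsum N (fun i => r i * x i k)) ^ 2)).
      assert (HM : forall k, fsum N (fun i => x i k ^ 2) <= M).
      { intro k. unfold M. rewrite <- (rad_square0 N (fun i => x i k)).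
        apply rad_exp_mono. intros e _. rewrite pow2_abs.
        rewrite <- (pow2_abs (supnorm _)). rewrite <- (pow2_abs (fsum N _)).
        apply pow_incr. split; [apply Rabs_pos|].
        eapply Rle_trans; [|apply Rle_abs].
        apply (supnorm_ge (fun k0 => fsum N (fun i => e i * x i k0)) k).
        apply comb_c0; auto. }
      assert (HM0 : 0 <= M).
      { eapply Rle_trans; [|apply (HM 0%nat)]. apply fsum_nonneg; intros; apply pow2_ge_0. }
      rewrite rad_square0.
      destruct (exists_B N (fun i n => S i (x i) ^ 2 <= a n ^ 2 * x i n ^ 2)) as [B HB].
      { intros i Hi. destruct (HS i Hi) as [n ->]. exists n. unfold Tdiag. right; ring. }
      assert (Hsum : fsum N (fun i => S i (x i) ^ 2) <= l * M).
      { eapply Rle_trans. apply (group_bound a (fun i k => x i k ^ 2)).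
        intros; apply pow2_ge_0. exact HB.
        eapply Rle_trans. apply (fsum_le B _ (fun k => a k ^ 2 * M)).
        intros; apply Rmult_le_compat_l; [apply pow2_ge_0|apply HM].
        rewrite fsum_scal. apply Rmult_le_compat_r; auto. }
      rewrite <- sqrt_mult by auto. apply sqrt_le_1_alt. exact Hsum.
    + intros [d|] HD; simpl; auto.
      pose proof (lower a d HD) as Hlow.
      destruct HD as [Hd _].
      assert (l <= d ^ 2).
      { eapply Rle_cv_lim; [exact Hlow | exact Hl | apply cv_const]. }
      rewrite <- (sqrt_pow2 d) by auto. apply sqrt_le_1_alt; auto.
  - split; [exact I|]. intros [d|] HD; simpl; auto.
    pose proof (lower a d HD) as Hlow. apply Hnex.
    destruct (growing_cv _ (growing_fsum a)) as [l Hl].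
    { exists (d ^ 2). intros z [n ->]. apply Hlow. }
    exists l; exact Hl.
Qed.
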